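(* Let $I\neq\emptyset$ and let $(I_j)_{j\in J}$ be a partition of $I$. For every $j\in J$ let $K_j\subseteq T^{I_j}$ be a compact set which is a set of uniqueness for $A(\overline{D}^{I_j})$. Then the compact set $K=\prod_{j\in J}K_j\subseteq\prod_{j\in J}T^{I_j}\equiv T^I$ is a set of uniqueness for $A(\overline{D}^I)$.
   Context: $\overline{D}=\{z\in\mathbb{C}:|z|\le1\}$, $T=\{z\in\mathbb{C}:|z|=1\}$, with product topologies on all products. For a non-empty set $S$, $A(\overline{D}^S)$ is the set of all functions $f:\overline{D}^S\to\mathbb{C}$ that are continuous and such that for every $s_0\in S$ and every $z\in\overline{D}^S$ the function of one variable obtained by varying only the coordinate $s_0$ (keeping the others equal to those of $z$) belongs to the disc algebra $A(\overline{D})$ (continuous on $\overline{D}$, holomorphic on the open disc). A compact set $K\subseteq T^S$ is a set of uniqueness for $A(\overline{D}^S)$ if any $f,g\in A(\overline{D}^S)$ with $f|_K=g|_K$ satisfy $f\equiv g$ on $\overline{D}^S$. *)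

(* Defs.v *)
From HB Require Import structures.
From mathcomp Require Import all_boot all_order all_algebra.
From mathcomp Require Import all_classical all_reals all_analysis.
From mathcomp Require Import complex.
Unset Printing Implicit Defensive.
Import Order.TTheory GRing.Theory Num.Theory.
Import numFieldTopology.Exports numFieldNormedType.Exports.
Local Open Scope classical_set_scope.
Local Open Scope ring_scope.

(* The complex numbers: C R := R[i] (mathcomp-real-closed's complex numbers
   over R : realType), seen as a numClosedFieldType so that mathcomp-analysis
   equips it with its norm topology (|.| is the complex modulus). *)
Definition C (R : realType) : numClosedFieldType := R[i].

Definition cdisc (R : realType) : set (C R) := [set z | `|z| <= 1].
Definition odisc (R : realType) : set (C R) := [set z | `|z| < 1].
Definition circ (R : realType) : set (C R) := [set z | `|z| = 1].

Definition polydisc (R : realType) (S : Type) : set {ptws S -> C R} :=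
  [set z | forall s, cdisc R (z s)].
Definition torus (R : realType) (S : Type) : set {ptws S -> C R} :=
  [set z | forall s, circ R (z s)].

Definition cdifferentiable (R : realType) (g : C R -> C R) (z0 : C R) :=
  exists l : C R, (fun h : C R => (g (z0 + h) - g z0) / h) @ (0 : C R)^' --> l.
Arguments cdifferentiable {R} g z0.

Definition disc_algebra (R : realType) (g : C R -> C R) :=
  {within cdisc R, continuous g} /\
  (forall z0, odisc R z0 -> cdifferentiable g z0).
Arguments disc_algebra {R} g.

Definition upd (R : realType) (S : Type) (z : S -> C R) (s0 : S) (w : C R)
  : {ptws S -> C R} := fun s => if `[< s = s0 >] then w else z s.
Arguments upd {R S} z s0 w.

(* A(Dbar^S) ; functions are total on S -> C but only their values on Dbar^S matter *)
Definition polydisc_algebra (R : realType) (S : Type)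
    (f : {ptws S -> C R} -> C R) :=
  {within polydisc R S, continuous f} /\
  (forall (s0 : S) (z : {ptws S -> C R}), polydisc R S z ->
     disc_algebra (fun w => f (upd z s0 w))).
Arguments polydisc_algebra {R S} f.

Definition uniqueness_set (R : realType) (S : Type) (K : set {ptws S -> C R}) :=
  forall f g : {ptws S -> C R} -> C R,
    polydisc_algebra f -> polydisc_algebra g ->
    (forall z, K z -> f z = g z) ->
    forall z, polydisc R S z -> f z = g z.
Arguments uniqueness_set {R S} K.

(* the block I_j = {i | p i = j} of the partition induced by p : I -> J *)
Definition block (I J : Type) (p : I -> J) (j : J) := {i : I | p i = j}.
Arguments block {I J} p j.

Definition restr (R : realType) (I J : Type) (p : I -> J) (j : J)
  (z : {ptws I -> C R}) : {ptws block p j -> C R} := fun i => z (proj1_sig i).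
Arguments restr {R I J} p j z.

Definition prodK (R : realType) (I J : Type) (p : I -> J)
  (K : forall j : J, set {ptws block p j -> C R}) : set {ptws I -> C R} :=
  [set z | forall j, K j (restr p j z)].

Arguments prodK {R I J p} K.

(* Main.v *)
Require Import Defs.
From HB Require Import structures.
From mathcomp Require Import all_boot all_order all_algebra.
From mathcomp Require Import all_classical all_reals all_analysis.
From mathcomp Require Import complex.
Import Order.TTheory GRing.Theory Num.Theory.
Import numFieldTopology.Exports numFieldNormedType.Exports.
Local Open Scope classical_set_scope.
Local Open Scope ring_scope.

Lemma ptws_cvgP (I : Type) (V : uniformType) (F : set_system {ptws I -> V})
  (FF : Filter F) (f : {ptws I -> V}) :
  F --> f <-> forall t : I, (fun g : {ptws I -> V} => g t) @ F --> f t.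
Proof. exact: (@pointwise_cvgP (discrete_topology {classic I}) V F f FF). Qed.

Lemma ptws_compact (I : Type) (V : topologicalType) (A : I -> set V) :
  (forall i, compact (A i)) -> compact [set f : {ptws I -> V} | forall i, A i (f i)].
Proof. move=> H. exact: (@tychonoff {classic I} (fun _ => V) A H). Qed.

Lemma ptws_hausdorff (I : Type) (V : topologicalType) :
  hausdorff_space V -> hausdorff_space {ptws I -> V}.
Proof. move=> H. exact: (@hausdorff_product {classic I} (fun _ => V) (fun _ => H)). Qed.

Lemma C_hausdorff (R : realType) : hausdorff_space (C R).
Proof. exact: norm_hausdorff. Qed.

Lemma coord_cont (I : Type) (V : uniformType) (i : I) :
  continuous (fun g : {ptws I -> V} => g i).
Proof. move=> g; exact: (proj1 (@ptws_cvgP I V (nbhs g) _ g) cvg_id i). Qed.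

Lemma restr_cont (R : realType) (I J : Type) (p : I -> J) (j : J) :
  continuous (restr (R:=R) p j).
Proof.
move=> z.
apply: (proj2 (@ptws_cvgP (block p j) (C R) (restr p j @ nbhs z) _ (restr p j z))) => t.
move=> A HA; exact: (coord_cont _ _ (proj1_sig t) z _ HA).
Qed.

Fixpoint lin {T : Type} (x : T) (l : seq T) : Prop :=
  match l with nil => False | a :: l => a = x \/ lin x l end.

Lemma lin_cat {T : Type} (x : T) (s1 s2 : seq T) :
  lin x s1 \/ lin x s2 -> lin x (s1 ++ s2).
Proof.
elim: s1 => [[]//|a s1 IH] /= [[->|h]|h]; [by left|right; apply: IH; by left|right; apply: IH; by right].
Qed.

Section Parts.
Variables (R : realType) (I J : Type) (p : I -> J).
Variable (K : forall j : J, set {ptws block p j -> C R}).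

Lemma part1 (K_sub : forall j, K j `<=` torus R (block p j)) :
  prodK K `<=` torus R I.
Proof.
move=> z Kz i; have := K_sub _ _ (Kz (p i)).
by move=> /(_ (exist _ i erefl)).
Qed.

Lemma part2 (K_compact : forall j, compact (K j)) : compact (prodK K).
Proof.
pose A i := (fun u : {ptws block p (p i) -> C R} => u (exist _ i erefl)) @` K (p i).
apply: (@subclosed_compact _ _ [set f : {ptws I -> C R} | forall i, A i (f i)]).
- have -> : prodK K = \bigcap_(j in setT) (restr p j @^-1` K j).
    by apply/seteqP; split => [z Kz j _|z Kz j]; [exact: Kz|exact: Kz].
  apply: closed_bigI => j _; apply: preimage_closed.
    by move=> z _; exact: restr_cont.
  apply: compact_closed => //; apply: ptws_hausdorff; exact: C_hausdorff.
- apply: ptws_compact => i; apply: continuous_compact => //.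
  apply: continuous_subspaceT; exact: (coord_cont _ _ (exist _ i erefl)).
- by move=> z Kz i; exists (restr p (p i) z) => //; exact: Kz.
Qed.

Definition glue (j : J) (u : {ptws block p j -> C R}) (w : {ptws I -> C R}) :
  {ptws I -> C R} :=
  fun i => match pselect (p i = j) with
           | left H => u (exist _ i H) | right _ => w i end.

Lemma restr_glue j u w : restr p j (glue j u w) = u.
Proof.
apply: funext => -[i H]; rewrite /restr /glue /=.
case: pselect => [H'|//]; by rewrite (Prop_irrelevance H' H).
Qed.

Lemma restr_glue_ne j j' u w : j' <> j -> restr p j' (glue j u w) = restr p j' w.
Proof.
move=> ne; apply: funext => -[i H]; rewrite /restr /glue /=.
case: pselect => [H'|//]; by exfalso; apply: ne; rewrite -H -H'.
Qed.

Lemma glue_restr j w : glue j (restr p j w) w = w.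
Proof. by apply: funext => i; rewrite /glue /restr; case: pselect. Qed.

Lemma glue_upd j u w (s0 : block p j) x :
  glue j (upd u s0 x) w = upd (glue j u w) (proj1_sig s0) x.
Proof.
apply: funext => i; rewrite /glue /upd.
case: pselect => [H|H].
  case: (asboolP (exist _ i H = s0)) => [e|ne]; case: (asboolP (i = proj1_sig s0)) => [e'|ne'] //.
  - by exfalso; apply: ne'; rewrite -e.
  - exfalso; apply: ne; move: H; rewrite e' => H; case: s0 {e'} H => i0 H0 H /=.
    by rewrite (Prop_irrelevance H H0).
case: (asboolP (i = proj1_sig s0)) => [e|//].
by exfalso; apply: H; rewrite e; exact: (proj2_sig s0).
Qed.

Lemma glue_polydisc j u w : polydisc R _ u -> polydisc R _ w -> polydisc R _ (glue j u w).
Proof. by move=> Pu Pw i; rewrite /glue; case: pselect. Qed.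

Lemma glue_cont j w : continuous (fun u => glue j u w).
Proof.
move=> u.
apply: (proj2 (@ptws_cvgP I (C R) ((fun u => glue j u w) @ nbhs u) _ (glue j u w))) => i.
have gi : forall u0, glue j u0 w i =
  match pselect (p i = j) with left H => u0 (exist _ i H) | right _ => w i end.
  by [].
case: pselect gi => [H|H] gi.
  move=> A; rewrite gi => HA.
  have HU := coord_cont _ _ (exist _ i H) u _ HA.
  have HU' : nbhs u [set v : {ptws block p j -> C R} | A (v (exist _ i H))] := HU.
  suff S : nbhs u [set v : {ptws block p j -> C R} | A (glue j v w i)] by [].
  by apply: filterS HU' => v /=; rewrite gi.
move=> A; rewrite gi => HA.
suff S : nbhs u [set v : {ptws block p j -> C R} | A (glue j v w i)] by [].
apply: (filterS _ (@filterT _ _ (nbhs_filter u))) => v _ /=; rewrite gi.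
exact: nbhs_singleton.
Qed.

Lemma glue_alg j w (f : {ptws I -> C R} -> C R) :
  polydisc R I w -> polydisc_algebra f ->
  polydisc_algebra (fun u : {ptws block p j -> C R} => f (glue j u w)).
Proof.
move=> Pw [fc fs]; split.
  apply/subspace_continuousP => u Pu.
  have hf := (proj1 (subspace_continuousP _ f) fc) (glue j u w) (@glue_polydisc j u w Pu Pw).
  have hg : (fun v => glue j v w) @ within (polydisc R _) (nbhs u) -->
            within (polydisc R I) (nbhs (glue j u w)).
    move=> B HB.
    have HB' : nbhs (glue j u w) [set x | polydisc R I x -> B x] := HB.
    have H2 := glue_cont j w u _ HB'.
    have H3 : nbhs u [set v | polydisc R I (glue j v w) -> B (glue j v w)] := H2.
    suff S : nbhs u [set v | polydisc R _ v -> B (glue j v w)] by [].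
    by apply: filterS H3 => v + Pv; apply; exact: (@glue_polydisc j v w).
  move=> B HB; exact: (hg _ (hf _ HB)).
move=> s0 z Pz.
have -> : (fun x => f (glue j (upd z s0 x) w)) =
          (fun x => f (upd (glue j z w) (proj1_sig s0) x)).
  by apply: funext => x; rewrite glue_upd.
exact: fs (@glue_polydisc j z w Pz Pw).
Qed.


Lemma finite_case (K_sub : forall j, K j `<=` torus R (block p j))
  (K_uniq : forall j, uniqueness_set (K j))
  (f g : {ptws I -> C R} -> C R) (Hf : polydisc_algebra f) (Hg : polydisc_algebra g)
  (Hfg : forall z, prodK K z -> f z = g z) :
  forall (l : seq J) (w : {ptws I -> C R}), polydisc R I w ->
    (forall j, ~ lin j l -> K j (restr p j w)) -> f w = g w.
Proof.
elim=> [|j l IH] w Pw Hw.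
  by apply: Hfg => j; apply: Hw.
have Prw : polydisc R _ (restr p j w) by move=> s; exact: Pw.
have H1 : forall u, K j u -> f (glue j u w) = g (glue j u w).
  move=> u Ku; apply: IH.
    apply: glue_polydisc => // s.
    by have := K_sub j u Ku s; rewrite /circ /cdisc /= => ->.
  move=> j' nj'; case: (pselect (j' = j)) => [->|ne].
    by rewrite restr_glue.
  rewrite restr_glue_ne //; apply: Hw => -[e|//]; exact: ne (esym e).
have := K_uniq j _ _ (@glue_alg j w f Pw Hf) (@glue_alg j w g Pw Hg) H1 (restr p j w) Prw.
by rewrite /= glue_restr.
Qed.

End Parts.

Lemma cst_alg (R : realType) (S : Type) (c : C R) :
  polydisc_algebra (fun _ : {ptws S -> C R} => c).
Proof.
split.
  by apply: continuous_subspaceT; exact: cst_continuous.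
move=> s0 z Pz; split.
  by apply: continuous_subspaceT; exact: cst_continuous.
move=> z0 _; exists 0.
have -> : (fun h : C R => (c - c) / h) = fun _ => 0.
  by apply: funext => h; rewrite subrr mul0r.
exact: cvg_cst.
Qed.

Theorem proposition3p8 (R : realType) (I J : Type) (p : I -> J)
    (I_nonempty : exists i : I, True)
    (blocks_nonempty : forall j : J, exists i : I, p i = j)
    (K : forall j : J, set {ptws block p j -> C R})
    (K_sub : forall j, K j `<=` torus R (block p j))
    (K_compact : forall j, compact (K j))
    (K_uniq : forall j, uniqueness_set (K j)) :
  prodK K `<=` torus R I /\ compact (prodK K) /\ uniqueness_set (prodK K).
Proof.
split; first exact: part1.
split; first exact: part2.
move=> f g Hf Hg Hfg z Pz.
have Kne : forall j, exists u, K j u.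
  move=> j; case: (pselect (exists u, K j u)) => // nK; exfalso.
  have P0 : polydisc R (block p j) (fun _ => 0) by move=> s; rewrite /cdisc /= normr0 ler01.
  have hyp : forall u, K j u -> (fun _ : {ptws block p j -> C R} => (0 : C R)) u = (fun _ => 1) u.
    by move=> u Ku; exfalso; apply: nK; exists u.
  have := K_uniq j _ _ (cst_alg _ _ 0) (cst_alg _ _ 1) hyp _ P0.
  by move=> /= /esym/eqP; rewrite oner_eq0.
pose kk j := proj1_sig (cid (Kne j)).
have Kkk : forall j, K j (kk j) by move=> j; exact: (proj2_sig (cid (Kne j))).
pose k : {ptws I -> C R} := fun i => kk (p i) (exist _ i erefl).
have restr_k : forall j, restr p j k = kk j.
  move=> j; apply: funext => -[i H]; rewrite /restr /k /=; by destruct H.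
have Pk : polydisc R I k.
  move=> i; have := K_sub _ _ (Kkk (p i)) (exist _ i erefl).
  by rewrite /circ /cdisc /k /= => ->.
pose Phi (l : seq J) : {ptws I -> C R} := fun i => if `[< lin (p i) l >] then z i else k i.
have PPhi : forall l, polydisc R I (Phi l).
  by move=> l i; rewrite /Phi; case: asboolP.
have fgPhi : forall l, f (Phi l) = g (Phi l).
  move=> l; apply: (@finite_case R I J p K K_sub K_uniq f g Hf Hg Hfg l (Phi l) (PPhi l)) => j nj.
  have -> : restr p j (Phi l) = restr p j k.
    apply: funext => -[i H]; rewrite /restr /Phi /=.
    by case: asboolP => // hin; exfalso; apply: nj; rewrite -H.
  by rewrite restr_k.
pose Filt := filter_from [set: seq J] (fun s : seq J => [set l : seq J | forall j, lin j s -> lin j l]).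
have FF : Filter Filt.
  apply: filter_from_filter; first by exists [::].
  move=> s1 s2 _ _; exists (s1 ++ s2) => // l Hl; split => j hj; apply: Hl; apply: lin_cat; by [left|right].
have PF : ProperFilter Filt.
  by apply: filter_from_proper => s _; exists s.
have hconv : Phi @ Filt --> z.
  apply: (proj2 (@ptws_cvgP I (C R) (Phi @ Filt) (fmap_filter _ FF) z)) => t.
  move=> A HA.
  suff S : Filt [set l | A (Phi l t)] by [].
  exists [:: p t] => // l /(_ (p t) (or_introl erefl)) Hin.
  rewrite /= /Phi; case: asboolP => [_|nin]; [exact: nbhs_singleton HA|by exfalso].
have hPhi : Phi @ Filt --> within (polydisc R I) (nbhs z).
  move=> B HB.
  have HB' : nbhs z [set x | polydisc R I x -> B x] := HB.
  have H2 := hconv _ HB'.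
  have H3 : Filt [set l | polydisc R I (Phi l) -> B (Phi l)] := H2.
  suff S : Filt [set l | B (Phi l)] by [].
  by apply: filterS H3 => l; apply.
have hf := (proj1 (subspace_continuousP _ f) Hf.1) z Pz.
have hg := (proj1 (subspace_continuousP _ g) Hg.1) z Pz.
have cf : (f \o Phi) @ Filt --> f z by move=> B HB; exact: (hPhi _ (hf _ HB)).
have cg : (f \o Phi) @ Filt --> g z.
  have -> : f \o Phi = g \o Phi by apply: funext => l; exact: fgPhi.
  by move=> B HB; exact: (hPhi _ (hg _ HB)).
exact: (@cvg_unique _ (@C_hausdorff R) _ (fmap_proper_filter _ PF) _ _ cf cg).
Qed.
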